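(* Let $E$ and $E'$ be disjunctive interval multiplicity expressions (DIMEs) over a finite alphabet $\Sigma$. Then $L(E)=L(E')$ if and only if $\Delta_E=\Delta_{E'}$.
   Context: Unordered words are functions $w:\Sigma\to\mathbb{N}_0$; $a\in w$ means $w(a)\neq 0$; $\varepsilon$ is the all-zero word; unordered concatenation $\uplus$ is multiset union, extended to languages pointwise. An interval is $[n,m]$ or $[n,m]^?$ with $n\in\mathbb{N}_0$, $m\in\mathbb{N}_0\cup\{\infty\}$; $L(E^{[n,m]})=\{w_1\uplus\dots\uplus w_i\mid n\le i\le m, w_j\in L(E)\}$, $L(E^{[n,m]^?})=L(E^{[n,m]})\cup\{\varepsilon\}$; the multiplicities $*,+,?,1$ denote $[0,\infty],[1,\infty],[0,1],[1,1]$. Also $L(a)=\{a\}$, $L(E_1\mid E_2)=L(E_1)\cup L(E_2)$, $L(E_1\mathbin{|\hspace{-0.1em}|} E_2)=L(E_1)\uplus L(E_2)$. An atom is $(a_1^{I_1}\mathbin{|\hspace{-0.1em}|}\dots\mathbin{|\hspace{-0.1em}|} a_k^{I_k})$ with $a_i\in\Sigma$ and each $I_i\in\{?,1\}$. A clause is $(A_1^{I_1}\mid\dots\mid A_k^{I_k})$ with atoms $A_i$ and intervals $I_i$; it is simple if each $I_i\in\{?,1\}$. A DIME is $(D_1^{I_1}\mathbin{|\hspace{-0.1em}|}\dots\mathbin{|\hspace{-0.1em}|} D_k^{I_k})$ where for each $i$ either $D_i$ is a simple clause and $I_i\in\{+,*\}$, or $D_i$ is a clause and $I_i\in\{1,?\}$;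 moreover each symbol occurs at most once in the DIME. The characterizing tuple of a DIME $E$ is $\Delta_E=(C_E,N_E,P_E,K_E)$ where $C_E=\{(a,b)\in\Sigma\times\Sigma\mid \neg\exists w\in L(E).\ a\in w\wedge b\in w\}$, $N_E=\{(a,w(a))\mid a\in\Sigma, w\in L(E)\}$, $P_E=\{X\subseteq\Sigma\mid\forall w\in L(E).\ \exists a\in X.\ a\in w\}$, $K_E=\{(a,b)\in\Sigma\times\Sigma\mid\forall w\in L(E).\ w(a)\ge w(b)\}$. *)

(* Defs.v *)
From Stdlib Require List.
From mathcomp Require Import all_boot.
Set Implicit Arguments. Unset Strict Implicit. Unset Printing Implicit Defensive.

Section DIME.
Variable Sigma : finType.

(* Unordered words: functions Sigma -> nat (finite functions). *)
Definition word := {ffun Sigma -> nat}.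
Definition lang := word -> Prop.

Definition eps : word := [ffun _ => 0].
Definition wplus (w1 w2 : word) : word := [ffun a => w1 a + w2 a].
Definition wsym (a : Sigma) : word := [ffun b => nat_of_bool (b == a)].

Definition lconc (L1 L2 : lang) : lang :=
  fun w => exists w1 w2, L1 w1 /\ L2 w2 /\ w = wplus w1 w2.
Definition leps : lang := fun w => w = eps.

Fixpoint lpow (L : lang) (i : nat) : lang :=
  match i with 0 => leps | i'.+1 => lconc L (lpow L i') end.

(* Intervals [n,m] (iopt = false) and [n,m]^? (iopt = true); ihi = None is infinity. *)
Record interval := Interval { ilo : nat; ihi : option nat; iopt : bool }.

Definition interval_wf (I : interval) : Prop :=
  match ihi I with Some m => ilo I <= m | None => True end.

Definition mult_star := Interval 0 None false.
Definition mult_plus := Interval 1 None false.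
Definition mult_qm   := Interval 0 (Some 1) false.
Definition mult_one  := Interval 1 (Some 1) false.

Definition lmult (L : lang) (I : interval) : lang :=
  fun w => (exists i, ilo I <= i /\
                      (match ihi I with Some m => i <= m | None => True end) /\
                      lpow L i w)
           \/ (iopt I = true /\ w = eps).

(* An atom (a_1^{I_1} || ... || a_k^{I_k}); a clause (A_1^{I_1} | ... | A_k^{I_k});
   a DIME (D_1^{I_1} || ... || D_k^{I_k}). *)
Definition atom := seq (Sigma * interval).
Definition clause := seq (atom * interval).
Definition dime := seq (clause * interval).

Definition L_atom (A : atom) : lang :=
  foldr (fun p L => lconc (lmult (fun w => w = wsym p.1) p.2) L) leps A.
Definition L_clause (D : clause) : lang :=
  fun w => exists2 p, List.In p D & lmult (L_atom p.1) p.2 w.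
Definition L_dime (E : dime) : lang :=
  foldr (fun p L => lconc (lmult (L_clause p.1) p.2) L) leps E.

Definition atom_ok (A : atom) : Prop :=
  A <> [::] /\ forall p, List.In p A -> p.2 = mult_qm \/ p.2 = mult_one.
Definition clause_ok (D : clause) : Prop :=
  D <> [::] /\ forall p, List.In p D -> atom_ok p.1 /\ interval_wf p.2.
Definition simple_clause (D : clause) : Prop :=
  clause_ok D /\ forall p, List.In p D -> p.2 = mult_qm \/ p.2 = mult_one.

Definition dime_symbols (E : dime) : seq Sigma :=
  flatten [seq flatten [seq [seq q.1 | q <- p.1] | p <- c.1] | c <- E].

Definition is_dime (E : dime) : Prop :=
  E <> [::] /\
  (forall c, List.In c E ->
     (simple_clause c.1 /\ (c.2 = mult_plus \/ c.2 = mult_star)) \/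
     (clause_ok c.1 /\ (c.2 = mult_one \/ c.2 = mult_qm))) /\
  uniq (dime_symbols E).

(* Characterizing tuple Delta_E = (C_E, N_E, P_E, K_E), as predicates. *)
Definition C_E (E : dime) (a b : Sigma) : Prop :=
  ~ (exists w, L_dime E w /\ w a <> 0 /\ w b <> 0).
Definition N_E (E : dime) (a : Sigma) (n : nat) : Prop :=
  exists w, L_dime E w /\ w a = n.
Definition P_E (E : dime) (X : {set Sigma}) : Prop :=
  forall w, L_dime E w -> exists a, a \in X /\ w a <> 0.
Definition K_E (E : dime) (a b : Sigma) : Prop :=
  forall w, L_dime E w -> w b <= w a.

Definition same_delta (E E' : dime) : Prop :=
  (forall a b, C_E E a b <-> C_E E' a b) /\
  (forall a n, N_E E a n <-> N_E E' a n) /\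
  (forall X, P_E E X <-> P_E E' X) /\
  (forall a b, K_E E a b <-> K_E E' a b).

Definition same_lang (E E' : dime) : Prop :=
  forall w, L_dime E w <-> L_dime E' w.

End DIME.

(* Main.v *)
Require Import Defs.
From mathcomp Require Import all_boot zify.
From Stdlib Require Import Classical.
Set Implicit Arguments. Unset Strict Implicit. Unset Printing Implicit Defensive.

Section Pf.
Variable Sigma : finType.
Local Notation word := (word Sigma).
Local Notation lang := (lang Sigma).
Local Notation eps := (eps Sigma).

Definition closedP (Q : word -> Prop) :=
  Q eps /\ forall w1 w2, Q w1 -> Q w2 -> Q (wplus w1 w2).

Lemma lpow_closed Q (L : lang) i : closedP Q -> (forall w, L w -> Q w) ->
  forall w, lpow L i w -> Q w.
Proof.
move=> [He Hp] HL; elim: i => [|i IH] w /=; first by rewrite /leps => ->.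
move=> [w1 [w2 [H1 [H2 ->]]]]; apply: Hp; [exact: HL | exact: IH].
Qed.

Lemma lmult_closed Q (L : lang) I : closedP Q -> (forall w, L w -> Q w) ->
  forall w, lmult L I w -> Q w.
Proof.
move=> HQ HL w [[i [_ [_ Hi]]]|[_ ->]]; [exact: lpow_closed Hi | exact: HQ.1].
Qed.

Definition supp (S : seq Sigma) (w : word) := forall s, s \notin S -> w s = 0.

Lemma supp_closed S : closedP (supp S).
Proof.
split; first by move=> s _; rewrite ffunE.
move=> w1 w2 H1 H2 s Hs; by rewrite ffunE H1 // H2.
Qed.

Lemma wplusC (w1 w2 : word) : wplus w1 w2 = wplus w2 w1.
Proof. apply/ffunP=> s; by rewrite !ffunE addnC. Qed.
Lemma wplusA (w1 w2 w3 : word) : wplus w1 (wplus w2 w3) = wplus (wplus w1 w2) w3.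
Proof. apply/ffunP=> s; by rewrite !ffunE addnA. Qed.
Lemma wplus0 (w : word) : wplus w eps = w.
Proof. apply/ffunP=> s; by rewrite !ffunE addn0. Qed.
Lemma wplus0l (w : word) : wplus eps w = w.
Proof. apply/ffunP=> s; by rewrite !ffunE. Qed.

Definition syms (A : atom Sigma) : seq Sigma := [seq q.1 | q <- A].
Definition csyms (c : clause Sigma) : seq Sigma := flatten [seq syms p.1 | p <- c].

Lemma in_flatten_map T (f : T -> seq Sigma) l s :
  s \in flatten (map f l) <-> exists p, List.In p l /\ s \in f p.
Proof.
elim: l => [|p l IH] /=; first by split=> // [[p []]].
rewrite mem_cat; split.
  case/orP=> [H|/IH [q [Hq Hs]]]; [by exists p; auto | by exists q; auto].
move=> [q [[<-|Hq] Hs]]; apply/orP; [by left | right; apply/IH; eauto].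
Qed.

Lemma flatten_uniq_eq T (f : T -> seq Sigma) l p q s :
  uniq (flatten (map f l)) -> List.In p l -> List.In q l ->
  s \in f p -> s \in f q -> p = q.
Proof.
elim: l => [|x l IH] //=; rewrite cat_uniq => /and3P [_ Hh Hu].
have Hn : forall r, List.In r l -> s \in f r -> s \in f x -> False.
  move=> r Hr Hs Hx; move/hasP: Hh; apply; exists s => //.
  by apply/in_flatten_map; exists r.
move=> [<-|Hp] [<-|Hq] Hsp Hsq //.
- by case: (Hn _ Hq Hsq Hsp).
- by case: (Hn _ Hp Hsp Hsq).
- exact: IH.
Qed.

Lemma flatten_uniq_part T (f : T -> seq Sigma) l p :
  uniq (flatten (map f l)) -> List.In p l -> uniq (f p).
Proof.
elim: l => [|x l IH] //=; rewrite cat_uniq => /and3P [Hx _ Hu].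
by move=> [<-|Hp] //; apply: IH.
Qed.

Lemma In_syms (A : atom Sigma) q : List.In q A -> q.1 \in syms A.
Proof.
elim: A => [|p A IH] //= [->|H]; rewrite inE; first by rewrite eqxx.
by rewrite IH ?orbT.
Qed.

Definition CL (L : lang) a b := ~ (exists w, L w /\ w a <> 0 /\ w b <> 0).
Definition NL (L : lang) a n := exists w, L w /\ w a = n.
Definition PL (L : lang) (X : {set Sigma}) :=
  forall w, L w -> exists a, a \in X /\ w a <> 0.
Definition KL (L : lang) a b := forall w, L w -> w b <= w a.
Definition SatL (L : lang) (w : word) :=
  (forall a, NL L a (w a)) /\
  (forall a b, CL L a b -> ~ (w a <> 0 /\ w b <> 0)) /\
  (forall X, PL L X -> exists a, a \in X /\ w a <> 0) /\
  (forall a b, KL L a b -> w b <= w a).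

Lemma L_Sat (L : lang) w : L w -> SatL L w.
Proof.
move=> Hw; split; first by move=> a; exists w.
split; first by move=> a b HC [Ha Hb]; apply: HC; exists w.
split; first by move=> X HP; apply: HP.
by move=> a b HK; apply: HK.
Qed.

Lemma SatL_ext (L L' : lang) w : (forall w, L w <-> L' w) -> SatL L w -> SatL L' w.
Proof.
move=> HE [HN [HC [HP HK]]]; split.
  by move=> a; have [w' [H1 H2]] := HN a; exists w'; split=> //; apply/HE.
split.
  move=> a b HC'; apply: HC => -[w' [H1 H2]]; apply: HC'; exists w'; split=> //.
  exact/HE.
split.
  move=> X HP'; apply: HP => w' Hw'; apply: HP'; exact/HE.
move=> a b HK'; apply: HK => w' Hw'; apply: HK'; exact/HE.
Qed.

Lemma Sat_supp (L : lang) S w : (forall w, L w -> supp S w) -> SatL L w -> supp S w.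
Proof. move=> HS [HN _] s Hs; have [w' [Hw' <-]] := HN s; exact: HS Hw' s Hs. Qed.

Lemma neq_eps (w : word) : w <> eps -> exists s, w s <> 0.
Proof.
move=> Hne; case: (boolP [exists a, w a != 0]) => [/existsP [a Ha]|].
  by exists a; apply/eqP.
rewrite negb_exists => /forallP H; exfalso; apply: Hne.
apply/ffunP => a; rewrite ffunE; have := H a; by rewrite negbK => /eqP.
Qed.

Lemma Sat_eps (L : lang) S : (forall w, L w -> supp S w) -> SatL L eps -> L eps.
Proof.
move=> HS [_ [_ [HP _]]]; apply: NNPP => Hne.
have : PL L [set x | x \in S].
  move=> w Lw; have [a Ha] : exists a, w a <> 0.
    by apply: neq_eps => Hw; apply: Hne; rewrite -Hw.
  exists a; split=> //; rewrite inE; apply: contraT => HaS.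
  by case: Ha; apply: (HS _ Lw).
by move/HP => [a [_]]; rewrite ffunE.
Qed.

Definition restr (S : seq Sigma) (w : word) : word :=
  [ffun s => if s \in S then w s else 0].

Lemma restr_split S1 S2 (w : word) :
  (forall s, s \in S1 -> s \notin S2) -> supp (S1 ++ S2) w ->
  w = wplus (restr S1 w) (restr S2 w).
Proof.
move=> Hd Hs; apply/ffunP => s; rewrite !ffunE.
case: (boolP (s \in S1)) => H1.
  by rewrite (negbTE (Hd _ H1)) addn0.
case: ifP => H2 //; apply: Hs; by rewrite mem_cat negb_or H1 H2.
Qed.

Lemma restr_supp S (w : word) : supp S (restr S w).
Proof. move=> s Hs; by rewrite ffunE (negbTE Hs). Qed.

Lemma lconcC (L1 L2 : lang) w : lconc L1 L2 w <-> lconc L2 L1 w.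
Proof.
split=> -[w1 [w2 [H1 [H2 ->]]]]; exists w2, w1; by rewrite wplusC.
Qed.

Lemma Sat_lconc_l (L1 L2 : lang) S1 S2 w :
  (forall w, L1 w -> supp S1 w) -> (forall w, L2 w -> supp S2 w) ->
  (forall s, s \in S1 -> s \notin S2) ->
  SatL (lconc L1 L2) w -> SatL L1 (restr S1 w).
Proof.
move=> H1 H2 Hd [HN [HC [HP HK]]]; split.
  move=> a; rewrite ffunE; case: ifP => Ha.
    have [w' [[m [r [Hm [Hr ->]]]] Hw]] := HN a.
    by exists m; split=> //; rewrite -Hw ffunE (H2 _ Hr a (Hd _ Ha)) addn0.
  have [w' [[m [r [Hm [Hr _]]]] _]] := HN a.
  by exists m; split=> //; apply: (H1 _ Hm a); rewrite Ha.
split.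
  move=> a b HCab; rewrite !ffunE.
  case: ifP => Ha; last by move=> [H _]; apply: H.
  case: ifP => Hb; last by move=> [_ H]; apply: H.
  apply: HC => -[w' [[m [r [Hm [Hr ->]]]] [Hwa Hwb]]]; apply: HCab.
  exists m; split=> //; rewrite !ffunE in Hwa Hwb.
  by rewrite (H2 _ Hr a (Hd _ Ha)) addn0 in Hwa; rewrite (H2 _ Hr b (Hd _ Hb)) addn0 in Hwb.
split.
  move=> X HPX.
  have : PL (lconc L1 L2) (X :&: [set x | x \in S1]).
    move=> w' [m [r [Hm [Hr ->]]]]; have [a [HaX Hma]] := HPX m Hm.
    have HaS : a \in S1 by apply: contraT => H; case: Hma; exact: H1 Hm a H.
    exists a; split; first by rewrite !inE HaX HaS.
    by rewrite ffunE; move: Hma; case: (m a).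
  move/HP => [a [Ha Hwa]]; move: Ha; rewrite !inE => /andP [HaX HaS].
  by exists a; rewrite ffunE HaS.
move=> a b HKab; rewrite !ffunE; case: ifP => Hb //; case: ifP => Ha.
  apply: HK => w' [m [r [Hm [Hr ->]]]].
  rewrite !ffunE (H2 _ Hr b (Hd _ Hb)) addn0.
  exact: leq_trans (HKab _ Hm) (leq_addr _ _).
have [w' [[m [r [Hm [Hr Hw']]]] Hwb]] := HN b.
rewrite -Hwb Hw' ffunE (H2 _ Hr b (Hd _ Hb)) addn0.
by have := HKab _ Hm; rewrite (H1 _ Hm a) ?Ha.
Qed.

Lemma lconc_supp (L1 L2 : lang) S1 S2 :
  (forall w, L1 w -> supp S1 w) -> (forall w, L2 w -> supp S2 w) ->
  forall w, lconc L1 L2 w -> supp (S1 ++ S2) w.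
Proof.
move=> H1 H2 w [m [r [Hm [Hr ->]]]] s; rewrite mem_cat negb_or => /andP [Hs1 Hs2].
by rewrite ffunE (H1 _ Hm s Hs1) (H2 _ Hr s Hs2).
Qed.

Lemma Sat_lconc (L1 L2 : lang) S1 S2 w :
  (forall w, L1 w -> supp S1 w) -> (forall w, L2 w -> supp S2 w) ->
  (forall s, s \in S1 -> s \notin S2) ->
  (forall w, SatL L1 w -> L1 w) -> (forall w, SatL L2 w -> L2 w) ->
  SatL (lconc L1 L2) w -> lconc L1 L2 w.
Proof.
move=> H1 H2 Hd G1 G2 HS.
have Hd' : forall s, s \in S2 -> s \notin S1.
  by move=> s Hs; apply: contraT; rewrite negbK => /Hd; rewrite Hs.
exists (restr S1 w), (restr S2 w); split; first exact/G1/(Sat_lconc_l H1 H2 Hd HS).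
split; last by apply: restr_split => //; apply: (Sat_supp (lconc_supp H1 H2)).
apply/G2/(Sat_lconc_l H2 H1 Hd'); apply: SatL_ext HS => w'; exact: lconcC.
Qed.


Lemma lpow1 (L : lang) w : lpow L 1 w <-> L w.
Proof.
split; first by move=> [w1 [w2 [H1 [-> ->]]]]; rewrite wplus0.
by move=> H; exists w, eps; split=> //; split=> //; rewrite wplus0.
Qed.

Lemma lmult_one (L : lang) w : lmult L mult_one w <-> L w.
Proof.
split; last by move=> H; left; exists 1; split=> //; split=> //; apply/lpow1.
move=> [[i [/= Hi1 [Hi2 Hp]]]|[//]].
by case: i Hi1 Hi2 Hp => [|[|i]] //= _ _; move/lpow1.
Qed.

Lemma lmult_qm (L : lang) w : lmult L mult_qm w <-> w = eps \/ L w.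
Proof.
split.
  move=> [[i [/= Hi1 [Hi2 Hp]]]|[//]].
  by case: i Hi1 Hi2 Hp => [|[|i]] //= _ _; [left | move/lpow1; right].
move=> [->|H]; left; [exists 0 | exists 1]; split=> //; split=> //.
by apply/lpow1.
Qed.

Lemma lpow_mono (L L' : lang) i : (forall w, L w -> L' w) ->
  forall w, lpow L i w -> lpow L' i w.
Proof.
move=> H; elim: i => [|i IH] w //=.
by move=> [w1 [w2 [H1 [H2 ->]]]]; exists w1, w2; split; [apply: H|split; [apply: IH|]].
Qed.

Lemma lpow_add (L : lang) i j w1 w2 : lpow L i w1 -> lpow L j w2 ->
  lpow L (i + j) (wplus w1 w2).
Proof.
elim: i w1 => [|i IH] w1 /=; first by rewrite /leps => -> H; rewrite wplus0l.
move=> [u [v [Hu [Hv ->]]]] H2; exists u, (wplus v w2); split=> //; split.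
  exact: IH.
by rewrite wplusA.
Qed.

Lemma lpow0 (L : lang) w : lpow L 0 w -> w = eps.
Proof. by []. Qed.

Definition okA (A : atom Sigma) :=
  forall q, List.In q A -> q.2 = mult_qm \/ q.2 = mult_one.

Definition AtomPow (A : atom Sigma) (i : nat) (w : word) :=
  supp (syms A) w /\
  (forall q, List.In q A -> q.2 = mult_one -> w q.1 = i) /\
  (forall s, s \in syms A -> w s <= i).

Lemma qm_one : mult_qm <> mult_one.
Proof. by []. Qed.

Lemma atom1 A w : okA A -> uniq (syms A) -> (L_atom A w <-> AtomPow A 1 w).
Proof.
elim: A w => [|p A IH] w HA.
  move=> _; split.
    move=> /= ->; split; first by move=> s _; rewrite ffunE.
    by split=> // s.
  move=> [Hs _]; apply/ffunP => s; rewrite ffunE; exact: Hs.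
rewrite /= => /andP [Hp HU].
have HA' : okA A by move=> q Hq; apply: HA; right.
have Hw1 : forall w1, lmult (fun w => w = wsym p.1) p.2 w1 ->
    (w1 = eps \/ w1 = wsym p.1) /\ (p.2 = mult_one -> w1 = wsym p.1).
  move=> w1; case: (HA p (or_introl erefl)) => ->.
    by move/lmult_qm => H; split=> // /qm_one.
  by move/lmult_one => H; split=> //; right.
split.
  move=> [w1 [w2 [H1 [H2 ->]]]]; have [[Hu1|Hu1] Hone] := Hw1 _ H1;
  have [Hs2 [Hr2 Hb2]] := (IH w2 HA' HU).1 H2.
  - have Hp2 : w2 p.1 = 0 by apply: Hs2.
    split.
      move=> s; rewrite inE negb_or => /andP [_ Hs]; by rewrite ffunE Hu1 ffunE Hs2.
    split.
      move=> q [<-|Hq] Hq1; first by rewrite (Hone Hq1) in Hu1; move/ffunP: Hu1 => /(_ p.1); rewrite !ffunE eqxx.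
      by rewrite ffunE Hu1 ffunE Hr2.
    move=> s; rewrite inE => /orP [/eqP ->|Hs]; rewrite ffunE Hu1 ffunE /=.
      by rewrite Hp2.
    exact: Hb2.
  - have Hp2 : w2 p.1 = 0 by apply: Hs2.
    split.
      move=> s; rewrite inE negb_or => /andP [Hs1 Hs]; rewrite ffunE Hu1 ffunE Hs2 //.
      by rewrite (negbTE Hs1).
    split.
      move=> q [<-|Hq] Hq1; first by rewrite ffunE Hu1 ffunE eqxx Hp2.
      have Hq1' : q.1 != p.1 by apply: contraNneq Hp => <-; apply: In_syms.
      by rewrite ffunE Hu1 ffunE (negbTE Hq1') Hr2.
    move=> s; rewrite inE => /orP [/eqP ->|Hs]; rewrite ffunE Hu1 ffunE.
      by rewrite eqxx Hp2.
    have Hs1 : s != p.1 by apply: contraNneq Hp => <-.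
    by rewrite (negbTE Hs1); apply: Hb2.
move=> [Hs [Hr Hb]].
have Hd : forall s, s \in [:: p.1] -> s \notin syms A.
  by move=> s; rewrite inE => /eqP ->.
exists (restr [:: p.1] w), (restr (syms A) w); split; last split.
- have Hb1 : w p.1 <= 1 by apply: Hb; rewrite inE eqxx.
  case: (HA p (or_introl erefl)) => Hp2.
    rewrite Hp2; apply/lmult_qm.
    move: Hb1; rewrite leq_eqVlt ltnS leqn0 => /orP [/eqP H1|/eqP H0].
      right; apply/ffunP => s; rewrite !ffunE inE; by case: eqP => [->|].
    left; apply/ffunP => s; rewrite !ffunE inE; by case: eqP => [->|].
  rewrite Hp2; apply/lmult_one; have H1 := Hr p (or_introl erefl) Hp2.
  apply/ffunP => s; rewrite !ffunE inE; by case: eqP => [->|].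
- apply/(IH _ HA' HU); split; first exact: restr_supp.
  split; first by move=> q Hq Hq1; rewrite ffunE In_syms //; apply: (Hr q _ Hq1); right.
  move=> s Hs'; rewrite ffunE Hs'; apply: Hb; by rewrite inE Hs' orbT.
- exact: restr_split.
Qed.

Lemma atom_pow A i w : okA A -> uniq (syms A) ->
  (lpow (L_atom A) i w <-> AtomPow A i w).
Proof.
move=> HA HU; elim: i w => [|i IH] w.
  split.
    move=> /= ->; split; first by move=> s _; rewrite ffunE.
    by split=> [q _ _|s _]; rewrite ffunE.
  move=> [Hs [_ Hb]]; apply/ffunP => s; rewrite ffunE.
  case: (boolP (s \in syms A)) => H; last exact: Hs.
  by have := Hb s H; rewrite leqn0 => /eqP.
split.
  move=> [w1 [w2 [H1 [H2 ->]]]].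
  have [Hs1 [Hr1 Hb1]] := (atom1 w1 HA HU).1 H1.
  have [Hs2 [Hr2 Hb2]] := (IH w2).1 H2.
  split; first by move=> s Hs; rewrite ffunE Hs1 // Hs2.
  split; first by move=> q Hq Hq1; rewrite ffunE Hr1 // Hr2.
  by move=> s Hs; rewrite ffunE; have := Hb1 s Hs; have := Hb2 s Hs; lia.
move=> [Hs [Hr Hb]].
pose w1 : word := [ffun s => if s \in syms A then minn (w s) 1 else 0].
pose w2 : word := [ffun s => w s - w1 s].
exists w1, w2; split; last split.
- apply/(atom1 _ HA HU); split; first by move=> s Hs'; rewrite ffunE (negbTE Hs').
  split; first by move=> q Hq Hq1; rewrite ffunE In_syms // Hr.
  by move=> s _; rewrite ffunE; case: ifP => _ //; apply: geq_minr.
- apply/IH; split.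
    by move=> s Hs'; rewrite !ffunE (negbTE Hs') Hs.
  split; first by move=> q Hq Hq1; rewrite !ffunE In_syms // Hr //; lia.
  move=> s Hs'; rewrite !ffunE Hs'; have := Hb s Hs'; lia.
- apply/ffunP => s; rewrite !ffunE; case: ifP => _; lia.
Qed.

Definition inrange (I : interval) (i : nat) :=
  ilo I <= i /\ match ihi I with Some m => i <= m | None => True end.

Lemma atom_mult A I w : okA A -> uniq (syms A) ->
  (lmult (L_atom A) I w <->
   (exists i, inrange I i /\ AtomPow A i w) \/ (iopt I = true /\ w = eps)).
Proof.
move=> HA HU; split.
  move=> [[i [H1 [H2 H3]]]|H]; last by right.
  by left; exists i; split=> //; apply/(atom_pow _ _ HA HU).
move=> [[i [[H1 H2] H3]]|H]; last by right.
by left; exists i; split=> //; split=> //; apply/(atom_pow _ _ HA HU).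
Qed.

Lemma foldr_max_in (s : seq nat) d n : n \in s -> n <= foldr maxn d s.
Proof.
elim: s => [|x s IH] //=; rewrite inE => /orP [/eqP ->|H]; rewrite leq_max.
  by rewrite leqnn.
by rewrite IH ?orbT.
Qed.

Lemma foldr_max_d (s : seq nat) d : d <= foldr maxn d s.
Proof. elim: s => [|x s IH] //=; by rewrite leq_max IH orbT. Qed.

Lemma foldr_max_le (s : seq nat) d b :
  (forall n, n \in s -> n <= b) -> d <= b -> foldr maxn d s <= b.
Proof.
elim: s => [|x s IH] //= H Hd; rewrite geq_max H ?inE ?eqxx //=.
by apply: IH => // n Hn; apply: H; rewrite inE Hn orbT.
Qed.


Lemma L_atom_supp A w : L_atom A w -> supp (syms A) w.
Proof.
elim: A w => [|p A IH] w /=; first by move=> -> s _; rewrite ffunE.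
move=> [w1 [w2 [H1 [H2 ->]]]] s; rewrite inE negb_or => /andP [Hs1 Hs2].
rewrite ffunE (IH _ H2 s Hs2) addn0.
have Hw1 : supp [:: p.1] w1.
  apply: (lmult_closed (supp_closed [:: p.1])) H1.
  by move=> u -> t Ht; rewrite ffunE; move: Ht; rewrite inE; case: eqP.
by apply: Hw1; rewrite inE.
Qed.

Lemma lmult_atom_supp A I w : lmult (L_atom A) I w -> supp (syms A) w.
Proof. apply: (lmult_closed (supp_closed _)); exact: L_atom_supp. Qed.

Lemma L_clause_supp c w : L_clause c w -> supp (csyms c) w.
Proof.
move=> [q Hq Hw] s Hs; apply: (lmult_atom_supp Hw); apply: contra Hs => H.
by apply/in_flatten_map; exists q.
Qed.

Lemma M_supp c I w : lmult (L_clause c) I w -> supp (csyms c) w.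
Proof. apply: (lmult_closed (supp_closed _)); exact: L_clause_supp. Qed.

Lemma L_dime_supp E w : L_dime E w -> supp (dime_symbols E) w.
Proof.
elim: E w => [|c E IH] w /=; first by move=> -> s _; rewrite ffunE.
by apply: (lconc_supp (@M_supp c.1 c.2) IH).
Qed.

Lemma clause_from c q x w : uniq (csyms c) -> List.In q c -> x \in syms q.1 ->
  L_clause c w -> w x <> 0 -> lmult (L_atom q.1) q.2 w.
Proof.
move=> HU Hq Hx [q0 Hq0 Hw] Hx0.
have Hxq0 : x \in syms q0.1.
  by apply: contraT => H; case: Hx0; exact: ((lmult_atom_supp Hw) x H).
by have E := flatten_uniq_eq HU Hq0 Hq Hxq0 Hx; rewrite -E.
Qed.

Lemma goodA c I w :
  (forall q, List.In q c -> okA q.1 /\ (q.2 = mult_qm \/ q.2 = mult_one)) ->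
  uniq (csyms c) -> (I = mult_plus \/ I = mult_star) ->
  SatL (lmult (L_clause c) I) w -> lmult (L_clause c) I w.
Proof.
move=> Hc HU HI HS.
have HMs := @M_supp c I.
case: (classic (w = eps)) => [Heq|Hne]; first by rewrite Heq in HS *; apply: (Sat_eps HMs HS).
have [HN [HC [HP HK]]] := HS.
have Hsw : supp (csyms c) w := Sat_supp HMs HS.
have HUq : forall q, List.In q c -> uniq (syms q.1).
  by move=> q Hq; exact: (flatten_uniq_part HU Hq).
have Kf : forall q, List.In q c -> forall q', List.In q' q.1 -> q'.2 = mult_one ->
    forall x, x \in syms q.1 -> w x <= w q'.1.
  move=> q Hq q' Hq' Hone x Hx; apply: HK => w' Hw'.
  have Hcl : closedP (fun w : word => w x <= w q'.1).
    split; first by rewrite !ffunE.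
    by move=> w1 w2 H1 H2; rewrite !ffunE; apply: leq_add.
  apply: (lmult_closed Hcl) Hw' => w0 [q0 Hq0 Hw0].
  case: (w0 x =P 0) => [->|Hx0] //.
  have Hxq0 : x \in syms q0.1.
    by apply: contraT => H; case: Hx0; exact: ((lmult_atom_supp Hw0) x H).
  have E := flatten_uniq_eq HU Hq0 Hq Hxq0 Hx; subst q0.
  apply: (lmult_closed Hcl) Hw0 => w1.
  move/(atom1 _ (Hc q Hq).1 (HUq q Hq)) => [_ [Hr Hb]].
  rewrite (Hr _ Hq' Hone); exact: Hb.
have build : forall l, (forall q, List.In q l -> List.In q c) -> uniq (csyms l) ->
    forall w0, supp (csyms l) w0 ->
    (forall q, List.In q l -> forall q', List.In q' q.1 -> q'.2 = mult_one ->
      forall x, x \in syms q.1 -> w0 x <= w0 q'.1) ->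
    exists i, lpow (L_clause c) i w0.
  elim=> [|q l IH] Hl Hul w0 Hs0 Hk0.
    by exists 0; apply/ffunP => s; rewrite ffunE; apply: Hs0.
  have Ec : csyms (q :: l) = syms q.1 ++ csyms l by [].
  move: Hul Hs0; rewrite Ec cat_uniq => /and3P [_ Hh Hul] Hs0.
  have Hd : forall s, s \in syms q.1 -> s \notin csyms l.
    by move=> s Hs; apply/negP => H; move/hasP: Hh; apply; exists s.
  rewrite (restr_split Hd Hs0).
  have [i Hi] : exists i, lpow (L_clause c) i (restr (csyms l) w0).
    apply: IH => //; first by move=> q0 Hq0; apply: Hl; right.
      exact: restr_supp.
    move=> q0 Hq0 q' Hq' Hone x Hx.
    have Hm : forall y, y \in syms q0.1 -> y \in csyms l.
      by move=> y Hy; apply/in_flatten_map; exists q0.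
    rewrite !ffunE Hm // Hm ?In_syms //; exact: (Hk0 q0 (or_intror Hq0)).
  pose k := foldr maxn 0 (map w0 (syms q.1)).
  have HAk : AtomPow q.1 k (restr (syms q.1) w0).
    split; first exact: restr_supp.
    split.
      move=> q' Hq' Hone; rewrite ffunE In_syms //; apply/eqP; rewrite eqn_leq.
      rewrite foldr_max_in ?map_f ?In_syms //=.
      apply: foldr_max_le => // n /mapP [y Hy ->].
      exact: (Hk0 q (or_introl erefl)).
    move=> s Hs; rewrite ffunE Hs; apply: foldr_max_in; exact: map_f.
  have Hq := Hl q (or_introl erefl).
  have Hk : lpow (L_clause c) k (restr (syms q.1) w0).
    apply: (lpow_mono (L := L_atom q.1)).
      move=> u Hu; exists q => //; case: (Hc q Hq).2 => ->.
        by apply/lmult_qm; right.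
      by apply/lmult_one.
    by apply/(atom_pow _ _ (Hc q Hq).1 (HUq q Hq)).
  by exists (k + i); apply: lpow_add.
have [i Hi] := build c (fun q H => H) HU w Hsw Kf.
have Hi0 : 0 < i.
  by case: i Hi => [|i] // /lpow0 H; case: Hne.
by left; exists i; case: HI => ->.
Qed.

Lemma goodB c I w :
  (forall q, List.In q c -> okA q.1 /\ interval_wf q.2) ->
  uniq (csyms c) -> (I = mult_one \/ I = mult_qm) ->
  SatL (lmult (L_clause c) I) w -> lmult (L_clause c) I w.
Proof.
move=> Hc HU HI HS.
have HMs := @M_supp c I.
case: (classic (w = eps)) => [Heq|Hne]; first by rewrite Heq in HS *; apply: (Sat_eps HMs HS).
have [HN [HC [HP HK]]] := HS.
have Hsw : supp (csyms c) w := Sat_supp HMs HS.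
have HUq : forall q, List.In q c -> uniq (syms q.1).
  by move=> q Hq; exact: (flatten_uniq_part HU Hq).
have HF1 : forall w', lmult (L_clause c) I w' -> w' = eps \/ L_clause c w'.
  by move=> w'; case: HI => -> ; [move/lmult_one; right | move/lmult_qm].
have FX : forall w' q x, lmult (L_clause c) I w' -> List.In q c -> x \in syms q.1 ->
    w' x <> 0 -> exists i, inrange q.2 i /\ AtomPow q.1 i w'.
  move=> w' q x Hw' Hq Hx Hx0.
  case: (HF1 _ Hw') => [Heps|Hcl]; first by rewrite Heps ffunE in Hx0.
  have := clause_from HU Hq Hx Hcl Hx0.
  move/(atom_mult _ _ (Hc q Hq).1 (HUq q Hq)) => [//|[_ Heps]].
  by rewrite Heps ffunE in Hx0.
have [s Hs0] := neq_eps Hne.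
have Hsc : s \in csyms c by apply: contraT => H; case: Hs0; apply: Hsw.
have [q [Hq Hsq]] := (in_flatten_map _ _ _).1 Hsc.
have Hsupp : supp (syms q.1) w.
  move=> t Ht; case Et: (w t) => [|n] //; exfalso.
  apply: (HC s t); last by split=> //; rewrite Et.
  move=> [w' [Hw' [Hs' Ht']]]; have [i [_ [Hsp _]]] := FX _ _ _ Hw' Hq Hsq Hs'.
  by apply: Ht'; apply: Hsp.
have HKq : forall q', List.In q' q.1 -> q'.2 = mult_one ->
    forall x, x \in syms q.1 -> w x <= w q'.1.
  move=> q' Hq' Hone x Hx; apply: HK => w' Hw'.
  case: (w' x =P 0) => [->//|Hx0].
  have [i [_ [_ [Hr Hb]]]] := FX _ _ _ Hw' Hq Hx Hx0.
  rewrite Hr //; exact: Hb.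
have Hhi : forall x, x \in syms q.1 ->
    match ihi q.2 with Some m => w x <= m | None => true end.
  move=> x Hx; case Em: (ihi q.2) => [m|] //.
  case: (w x =P 0) => [->//|Hx0].
  have [w' [Hw' Hwx]] := HN x.
  have Hx' : w' x <> 0 by rewrite Hwx.
  have [i [[_ Him] [_ [_ Hb]]]] := FX w' q x Hw' Hq Hx Hx'.
  rewrite Em in Him; rewrite -Hwx; exact: leq_trans (Hb x Hx) Him.
have Hlo : forall q', List.In q' q.1 -> q'.2 = mult_one -> ilo q.2 <= w q'.1.
  move=> q' Hq' Hone.
  have Hpos : w q'.1 <> 0 by have := HKq q' Hq' Hone s Hsq; move: Hs0; lia.
  have [w' [Hw' Hwx]] := HN q'.1.
  have Hx' : w' q'.1 <> 0 by rewrite Hwx.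
  have [i [[Hl _] [_ [Hr _]]]] := FX w' q q'.1 Hw' Hq (In_syms Hq') Hx'.
  by rewrite -Hwx (Hr q' Hq' Hone).
pose k := foldr maxn (ilo q.2) (map w (syms q.1)).
have HAk : AtomPow q.1 k w.
  split=> //; split.
    move=> q' Hq' Hone; apply/eqP; rewrite eqn_leq.
    rewrite foldr_max_in ?map_f ?In_syms //=.
    apply: foldr_max_le; last exact: Hlo.
    move=> n /mapP [y Hy ->]; exact: HKq.
  move=> x Hx; apply: foldr_max_in; exact: map_f.
have Hrk : inrange q.2 k.
  split; first exact: foldr_max_d.
  have Hwf := (Hc q Hq).2; rewrite /interval_wf in Hwf.
  case Em: (ihi q.2) Hwf => [m|] // Hwf.
  apply: foldr_max_le => // n /mapP [y Hy ->].
  by have := Hhi y Hy; rewrite Em.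
have Hcl : L_clause c w.
  exists q => //; apply/(atom_mult _ _ (Hc q Hq).1 (HUq q Hq)); left; by exists k.
by case: HI => ->; [apply/lmult_one | apply/lmult_qm; right].
Qed.

Lemma dime_main E :
  (forall c, List.In c E -> forall w, SatL (lmult (L_clause c.1) c.2) w ->
     lmult (L_clause c.1) c.2 w) ->
  uniq (dime_symbols E) -> forall w, SatL (L_dime E) w -> L_dime E w.
Proof.
elim: E => [|c E IH] Hg HU w HS.
  have [HN _] := HS; apply/ffunP => a; have [w' [Hw' <-]] := HN a.
  by rewrite Hw' !ffunE.
have Ed : dime_symbols (c :: E) = csyms c.1 ++ dime_symbols E by [].
move: HU; rewrite Ed cat_uniq => /and3P [_ Hh HU].
have Hd : forall s, s \in csyms c.1 -> s \notin dime_symbols E.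
  by move=> s Hs; apply/negP => H; move/hasP: Hh; apply; exists s.
apply: (Sat_lconc (@M_supp c.1 c.2) (@L_dime_supp E) Hd) => //.
  by apply: Hg; left.
by apply: IH => // c0 Hc0; apply: Hg; right.
Qed.

Lemma dime_char E w : is_dime E -> (L_dime E w <-> SatL (L_dime E) w).
Proof.
move=> [_ [Hc HU]]; split; first exact: L_Sat.
apply: dime_main => // c Hin w0.
have HUc : uniq (csyms c.1) by exact: (flatten_uniq_part (f := fun c => csyms c.1) HU Hin).
case: (Hc c Hin) => [[[[_ Hok] Hs] HI]|[[_ Hok] HI]].
  apply: goodA => // q Hq; split; [exact: (Hok q Hq).1.2 | exact: Hs].
apply: goodB => // q Hq; split; [exact: (Hok q Hq).1.2 | exact: (Hok q Hq).2].
Qed.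

End Pf.

Theorem corollary1 (Sigma : finType) (E E' : dime Sigma) :
  is_dime E -> is_dime E' -> (same_lang E E' <-> same_delta E E').
Proof.
move=> HE HE'; split.
  move=> HL; split; last split; last split.
  - move=> a b; split=> H [w [Hw Hr]]; apply: H; exists w; split=> //; exact/HL.
  - move=> a n; split=> -[w [Hw Hr]]; exists w; split=> //; exact/HL.
  - move=> X; split=> H w Hw; apply: H; exact/HL.
  - move=> a b; split=> H w Hw; apply: H; exact/HL.
move=> [HC [HN [HP HK]]] w.
rewrite (dime_char w HE) (dime_char w HE').
split=> -[h1 [h2 [h3 h4]]]; split; try split; try split.
- move=> a; exact: (proj1 (HN a (w a)) (h1 a)).
- move=> a b Hc; apply: h2; exact: (proj2 (HC a b) Hc).
- move=> X Hp; apply: h3; exact: (proj2 (HP X) Hp).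
- move=> a b Hk; apply: h4; exact: (proj2 (HK a b) Hk).
- move=> a; exact: (proj2 (HN a (w a)) (h1 a)).
- move=> a b Hc; apply: h2; exact: (proj1 (HC a b) Hc).
- move=> X Hp; apply: h3; exact: (proj1 (HP X) Hp).
- move=> a b Hk; apply: h4; exact: (proj1 (HK a b) Hk).
Qed.
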